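(* Let $D\ge1$, $P>0$, $\sigma_1^2,\sigma_2^2>0$, $\alpha_k>0$, $\beta_k>0$ for $k=1,\dots,D$, let $d_k\ge0$ be fixed with at least one $d_k>0$, and let $\varepsilon\in[0,1)$ be fixed. Consider the problem $$\max_{q_1,\dots,q_D\ge0}\;\frac{1-\varepsilon}{2}\sum_{k=1}^D\log_2\frac{\left(1+\frac{\alpha_k}{\sigma_1^2}q_k\right)\left(1+\frac{\beta_k}{\sigma_2^2}d_k\right)}{1+\frac{\alpha_k}{\sigma_1^2}q_k+\frac{\beta_k}{\sigma_2^2}d_k}\quad\text{s.t.}\quad\sum_{k=1}^D q_k\le P.$$ This problem is convex (the objective is concave in $(q_1,\dots,q_D)$), and for $\mu_2>0$ define $$q_k(\mu_2)=\frac{\sigma_1^2}{2\alpha_k}\left[\sqrt{\left(\frac{\beta_k}{\sigma_2^2}d_k\right)^2+\frac{2(1-\varepsilon)\beta_kd_k\alpha_k\mu_2}{\sigma_1^2\sigma_2^2\ln2}}-\frac{\beta_k}{\sigma_2^2}d_k-2\right]^+.$$ Then there exists $\mu_2^*>0$ with $\sum_{k=1}^D q_k(\mu_2^* )=P$, and for any such $\mu_2^*$ the vector $(q_1(\mu_2^* ),\dots,q_D(\mu_2^* ))$ is an optimal solution of the problem.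
   Context: This is the subproblem, with relay variables $d_k$ and time-switching ratio $\varepsilon$ fixed, of the joint source/relay/TS-ratio design for an energy-harvesting MIMO relay: $q_k$ is the power allocated by the source to the $k$-th eigenmode, $P$ the source power budget, $\alpha_k,\beta_k$ the squared singular values of the source–relay and relay–destination channels, and $\sigma_1^2,\sigma_2^2$ the noise variances at relay and destination. $(a)^+=\max\{0,a\}$. *)

(* Defs.v *)
From Stdlib Require Import Reals.
Open Scope R_scope.

(* rsum n f = f 0 + f 1 + ... + f (n-1)  (indices k = 1..D of the paper are 0..D-1 here) *)
Fixpoint rsum (n : nat) (f : nat -> R) : R :=
  match n with
  | O => 0
  | S m => rsum m f + f m
  end.

Definition log2 (x : R) : R := ln x / ln 2.

Definition pos_part (a : R) : R := Rmax 0 a.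

Definition obj (D : nat) (eps s1 s2 : R) (alpha beta d q : nat -> R) : R :=
  (1 - eps) / 2 *
  rsum D (fun k =>
    log2 ((1 + alpha k / s1 * q k) * (1 + beta k / s2 * d k)
          / (1 + alpha k / s1 * q k + beta k / s2 * d k))).

Definition feasible (D : nat) (P : R) (q : nat -> R) : Prop :=
  (forall k, (k < D)%nat -> 0 <= q k) /\ rsum D q <= P.

(* closed-form allocation q_k(mu2); s1 = sigma_1^2, s2 = sigma_2^2 *)
Definition q_mu (eps s1 s2 : R) (alpha beta d : nat -> R) (mu2 : R) (k : nat) : R :=
  s1 / (2 * alpha k) *
  pos_part (sqrt ((beta k / s2 * d k) ^ 2
                  + 2 * (1 - eps) * beta k * d k * alpha k * mu2 / (s1 * s2 * ln 2))
            - beta k / s2 * d k - 2).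

(* Main.v *)
Require Import Defs.
From Stdlib Require Import Reals Lra Psatz Ranalysis5.
From Coquelicot Require Import Coquelicot.
Open Scope R_scope.

Definition G (b x : R) := ln (1 + x) - ln (1 + x + b).

Lemma G_deriv b x : 0 <= b -> -1 < x ->
  derivable_pt_lim (G b) x (b / ((1 + x) * (1 + x + b))).
Proof.
  intros hb hx. apply is_derive_Reals. unfold G.
  auto_derive. split; lra. field. split; lra.
Qed.

Lemma dmono b x y : 0 <= b -> 0 <= x -> x <= y ->
  b / ((1 + y) * (1 + y + b)) <= b / ((1 + x) * (1 + x + b)).
Proof.
  intros hb hx hxy. unfold Rdiv. apply Rmult_le_compat_l; auto.
  apply Rinv_le_contravar. nra. nra.
Qed.

Lemma G_tangent b x y : 0 <= b -> 0 <= x -> 0 <= y ->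
  G b y <= G b x + b / ((1 + x) * (1 + x + b)) * (y - x).
Proof.
  intros hb hx hy.
  destruct (Rtotal_order x y) as [hlt|[heq|hgt]].
  - destruct (MVT_cor2 (G b) (fun c => b / ((1 + c) * (1 + c + b))) x y hlt)
      as [c [hc hc2]].
    { intros c hc. apply G_deriv; lra. }
    assert (h := dmono b x c hb hx ltac:(lra)).
    assert (b / ((1 + c) * (1 + c + b)) * (y - x) <= b / ((1 + x) * (1 + x + b)) * (y - x))
      by (apply Rmult_le_compat_r; lra).
    lra.
  - subst. lra.
  - destruct (MVT_cor2 (G b) (fun c => b / ((1 + c) * (1 + c + b))) y x hgt)
      as [c [hc hc2]].
    { intros c hc. apply G_deriv; lra. }
    assert (h := dmono b c x hb ltac:(lra) ltac:(lra)).
    assert (b / ((1 + x) * (1 + x + b)) * (x - y) <= b / ((1 + c) * (1 + c + b)) * (x - y))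
      by (apply Rmult_le_compat_r; lra).
    lra.
Qed.

Lemma kkt a b K L mu q : 0 < a -> 0 <= b -> 0 < K -> 0 < L -> 0 < mu -> 0 <= q ->
  let c := K * a * b * mu / L in
  let S := sqrt (b ^ 2 + 4 * c) in
  let xs := / 2 * Rmax 0 (S - b - 2) in
  K * (G b (a * q) / L) <= K * (G b xs / L) + (a * q - xs) / (a * mu).
Proof.
  intros ha hb hK hL hmu hq c S xs.
  assert (ec : c = K * a * b * mu / L) by reflexivity.
  assert (eS : S = sqrt (b ^ 2 + 4 * c)) by reflexivity.
  assert (exs0 : xs = / 2 * Rmax 0 (S - b - 2)) by reflexivity.
  clearbody c S xs.
  assert (hc : 0 <= c) by (rewrite ec; apply Rmult_le_pos; [|left; apply Rinv_0_lt_compat; lra];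
                            repeat apply Rmult_le_pos; lra).
  assert (hS2 : S * S = b ^ 2 + 4 * c) by (rewrite eS; apply sqrt_sqrt; nra).
  assert (hS : 0 <= S) by (rewrite eS; apply sqrt_pos).
  assert (hxs : 0 <= xs) by (rewrite exs0; assert (0 <= Rmax 0 (S - b - 2)) by apply Rmax_l; lra).
  assert (ht := G_tangent b xs (a * q) hb hxs ltac:(nra)).
  remember (b / ((1 + xs) * (1 + xs + b))) as m eqn:em0.
  assert (hP : 0 < (1 + xs) * (1 + xs + b)) by nra.
  assert (h1 : K * (G b (a * q) / L) <= K * (G b xs / L) + K / L * m * (a * q - xs)).
  { unfold Rdiv. assert (0 < K * / L) by (apply Rmult_lt_0_compat; [lra| apply Rinv_0_lt_compat; lra]).
    assert (K * / L * G b (a * q) <= K * / L * (G b xs + m * (a * q - xs))) by (apply Rmult_le_compat_l; lra).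
    replace (K * (G b (a * q) * / L)) with (K * / L * G b (a * q)) by ring.
    replace (K * (G b xs * / L) + K * / L * m * (a * q - xs)) with (K * / L * (G b xs + m * (a * q - xs))) by ring.
    lra. }
  assert (h2 : K / L * m * (a * q - xs) <= (a * q - xs) / (a * mu)).
  { destruct (Rle_lt_dec (S - b - 2) 0) as [hle|hgt].
    - assert (exs : xs = 0) by (rewrite exs0; rewrite Rmax_left; lra).
      rewrite exs in ht, h1 |- *.
      assert (hcb : c <= 1 + b) by nra.
      assert (em : K / L * m = c / (a * mu) / (1 + b)).
      { rewrite em0, ec, exs. field. repeat split; lra. }
      rewrite em.
      assert (c / (a * mu) / (1 + b) <= 1 / (a * mu)).
      { unfold Rdiv. rewrite Rmult_assoc, (Rmult_comm (/ (a*mu))), <- Rmult_assoc.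
        apply Rmult_le_compat_r. left; apply Rinv_0_lt_compat; nra.
        apply (Rmult_le_reg_r (1 + b)); [lra|]. rewrite Rmult_assoc, Rinv_l; lra. }
      assert (0 <= a * q - 0) by nra.
      replace ((a * q - 0) / (a * mu)) with (1 / (a * mu) * (a * q - 0)) by (field; nra).
      apply Rmult_le_compat_r; lra.
    - assert (exs : xs = (S - b - 2) / 2) by (rewrite exs0; rewrite Rmax_right; lra).
      assert (eP : (1 + xs) * (1 + xs + b) = c) by (rewrite exs; nra).
      assert (hbp : 0 < b).
      { destruct hb as [hb|hb]; auto. exfalso. rewrite ec in eP. rewrite <- hb in eP.
        rewrite exs in eP. nra. }
      assert (em : K / L * m = 1 / (a * mu)).
      { rewrite em0, eP, ec. field. repeat split; lra. }
      rewrite em. right. field. nra. }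
  lra.
Qed.

Lemma rmax_abs y : Rmax 0 y = (y + Rabs y) / 2.
Proof.
  unfold Rmax. destruct (Rle_dec 0 y).
  - rewrite Rabs_right; lra.
  - rewrite Rabs_left; lra.
Qed.

Lemma aff_cont A B E x : continuous (fun mu => sqrt (A + B * mu) - E) x.
Proof.
  apply (continuous_minus (fun mu => sqrt (A + B * mu)) (fun _ => E)); [|apply continuous_const].
  apply continuous_sqrt_comp.
  apply (continuous_plus (fun _ => A) (fun mu => B * mu)); [apply continuous_const|].
  apply (continuous_mult (fun _ => B) (fun mu => mu)); [apply continuous_const|apply continuous_id].
Qed.

Lemma gen_cont C A B E x : continuous (fun mu => C * Rmax 0 (sqrt (A + B * mu) - E)) x.
Proof.
  apply (continuous_ext (fun mu => C * (((sqrt (A + B * mu) - E) + Rabs (sqrt (A + B * mu) - E)) * / 2))).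
  { intros mu. rewrite rmax_abs. reflexivity. }
  apply (continuous_mult (fun _ => C)); [apply continuous_const|].
  apply (continuous_mult (fun mu => (sqrt (A + B * mu) - E) + Rabs (sqrt (A + B * mu) - E)) (fun _ => / 2)); [|apply continuous_const].
  apply (continuous_plus (fun mu => sqrt (A + B * mu) - E)).
  - apply aff_cont.
  - apply continuous_Rabs_comp. apply aff_cont.
Qed.

Lemma qmu_cont eps s1 s2 (alpha beta d : nat -> R) k x :
  continuous (fun mu => q_mu eps s1 s2 alpha beta d mu k) x.
Proof.
  unfold q_mu, pos_part.
  apply (continuous_ext (fun mu => s1 / (2 * alpha k) *
     Rmax 0 (sqrt ((beta k / s2 * d k) ^ 2 + (2 * (1 - eps) * beta k * d k * alpha k / (s1 * s2 * ln 2)) * mu) - (beta k / s2 * d k + 2)))).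
  { intros mu. f_equal. f_equal. unfold Rminus. rewrite Ropp_plus_distr, <- Rplus_assoc. f_equal. f_equal. f_equal. f_equal.
    unfold Rdiv. ring. }
  apply gen_cont.
Qed.

Lemma rsum_cont (f : nat -> R -> R) n x :
  (forall k, continuous (f k) x) -> continuous (fun mu => rsum n (fun k => f k mu)) x.
Proof.
  intros h. induction n as [|n IH]; simpl.
  - apply continuous_const.
  - apply (continuous_plus (fun mu => rsum n (fun k => f k mu)) (fun mu => f n mu)); auto.
Qed.

Lemma rsum_ext n f g : (forall k, (k < n)%nat -> f k = g k) -> rsum n f = rsum n g.
Proof. induction n; simpl; intros h; auto. rewrite IHn, h; auto. Qed.

Lemma rsum_le n f g : (forall k, (k < n)%nat -> f k <= g k) -> rsum n f <= rsum n g.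
Proof. induction n; simpl; intros h; [lra|]. assert (f n <= g n) by auto. assert (rsum n f <= rsum n g) by auto. lra. Qed.

Lemma rsum_lin2 n c1 c2 f g : rsum n (fun k => c1 * f k + c2 * g k) = c1 * rsum n f + c2 * rsum n g.
Proof. induction n; simpl; [ring|]. rewrite IHn. ring. Qed.

Lemma rsum_lin3 n c f g h : rsum n (fun k => f k + c * g k - c * h k) = rsum n f + c * rsum n g - c * rsum n h.
Proof. induction n; simpl; [ring|]. rewrite IHn. ring. Qed.

Lemma rsum_scal n c f : rsum n (fun k => c * f k) = c * rsum n f.
Proof. induction n; simpl; [ring|]. rewrite IHn. ring. Qed.

Lemma rsum_nonneg n f : (forall k, (k < n)%nat -> 0 <= f k) -> 0 <= rsum n f.
Proof. induction n; simpl; intros h; [lra|]. assert (0 <= f n) by auto. assert (0 <= rsum n f) by auto. lra. Qed.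

Lemma rsum_ge_term n f j : (forall k, (k < n)%nat -> 0 <= f k) -> (j < n)%nat -> f j <= rsum n f.
Proof.
  induction n; simpl; intros h hj; [lia|].
  destruct (Nat.eq_dec j n) as [->|hne].
  - assert (0 <= rsum n f) by (apply rsum_nonneg; auto). lra.
  - assert (f j <= rsum n f) by (apply IHn; auto; lia). assert (0 <= f n) by auto. lra.
Qed.

Lemma rsum_zero n : rsum n (fun _ => 0) = 0.
Proof. induction n; simpl; auto. rewrite IHn; ring. Qed.

Lemma term_eq a b q : 0 <= b -> 0 <= a * q ->
  log2 ((1 + a * q) * (1 + b) / (1 + a * q + b)) = (G b (a * q) + ln (1 + b)) / ln 2.
Proof.
  intros hb hq. unfold log2, G. rewrite ln_div, ln_mult; try lra; try nra; unfold Rdiv; ring.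
Qed.

Lemma ln2_pos : 0 < ln 2.
Proof. generalize ln_lt_2; lra. Qed.

Lemma term_concave a b q1 q2 t : 0 <= a -> 0 <= b -> 0 <= q1 -> 0 <= q2 -> 0 <= t <= 1 ->
  t * log2 ((1 + a * q1) * (1 + b) / (1 + a * q1 + b)) +
  (1 - t) * log2 ((1 + a * q2) * (1 + b) / (1 + a * q2 + b)) <=
  log2 ((1 + a * (t * q1 + (1 - t) * q2)) * (1 + b) / (1 + a * (t * q1 + (1 - t) * q2) + b)).
Proof.
  intros ha hb h1 h2 ht.
  assert (hz : 0 <= t * q1 + (1 - t) * q2) by nra.
  rewrite !term_eq; try nra.
  set (z := t * q1 + (1 - t) * q2) in *.
  assert (e1 := G_tangent b (a * z) (a * q1) hb ltac:(nra) ltac:(nra)).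
  assert (e2 := G_tangent b (a * z) (a * q2) hb ltac:(nra) ltac:(nra)).
  set (m := b / ((1 + a * z) * (1 + a * z + b))) in *.
  assert (i1 : t * G b (a * q1) <= t * (G b (a * z) + m * (a * q1 - a * z))) by (apply Rmult_le_compat_l; lra).
  assert (i2 : (1 - t) * G b (a * q2) <= (1 - t) * (G b (a * z) + m * (a * q2 - a * z))) by (apply Rmult_le_compat_l; lra).
  assert (ez : t * (G b (a * z) + m * (a * q1 - a * z)) + (1 - t) * (G b (a * z) + m * (a * q2 - a * z)) = G b (a * z)).
  { unfold z. ring. }
  assert (hL := ln2_pos).
  unfold Rdiv.
  replace (t * ((G b (a * q1) + ln (1 + b)) * / ln 2) + (1 - t) * ((G b (a * q2) + ln (1 + b)) * / ln 2))
    with ((t * G b (a * q1) + (1 - t) * G b (a * q2) + ln (1 + b)) * / ln 2) by ring.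
  apply Rmult_le_compat_r. left; apply Rinv_0_lt_compat; lra.
  lra.
Qed.

Lemma qmu_form eps s1 s2 (alpha beta d : nat -> R) mu k :
  0 < s1 -> 0 < s2 -> 0 < alpha k ->
  q_mu eps s1 s2 alpha beta d mu k =
  (/ 2 * Rmax 0 (sqrt ((beta k / s2 * d k) ^ 2 + 4 * ((1 - eps) / 2 * (alpha k / s1) * (beta k / s2 * d k) * mu / ln 2)) - beta k / s2 * d k - 2)) / (alpha k / s1).
Proof.
  intros h1 h2 ha. assert (hL := ln2_pos). unfold q_mu, pos_part.
  replace (2 * (1 - eps) * beta k * d k * alpha k * mu / (s1 * s2 * ln 2))
    with (4 * ((1 - eps) / 2 * (alpha k / s1) * (beta k / s2 * d k) * mu / ln 2)) by (field; lra).
  field. lra.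
Qed.

Lemma term_eq1 x b : 0 <= b -> 0 <= x ->
  log2 ((1 + x) * (1 + b) / (1 + x + b)) = (G b x + ln (1 + b)) / ln 2.
Proof. intros. replace x with (1 * x) by ring. apply term_eq; lra. Qed.

Lemma term_opt eps s1 s2 (alpha beta d : nat -> R) mu k q :
  0 < s1 -> 0 < s2 -> 0 < alpha k -> 0 <= beta k -> 0 <= d k -> 0 <= eps < 1 -> 0 < mu -> 0 <= q ->
  (1 - eps) / 2 * log2 ((1 + alpha k / s1 * q) * (1 + beta k / s2 * d k) / (1 + alpha k / s1 * q + beta k / s2 * d k))
  <= (1 - eps) / 2 * log2 ((1 + alpha k / s1 * q_mu eps s1 s2 alpha beta d mu k) * (1 + beta k / s2 * d k)
        / (1 + alpha k / s1 * q_mu eps s1 s2 alpha beta d mu k + beta k / s2 * d k))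
     + / mu * q - / mu * q_mu eps s1 s2 alpha beta d mu k.
Proof.
  intros h1 h2 ha hbe hd he hmu hq.
  assert (hL := ln2_pos).
  rewrite qmu_form by auto.
  set (a := alpha k / s1). set (b := beta k / s2 * d k).
  assert (hapos : 0 < a) by (unfold a; apply Rdiv_lt_0_compat; lra).
  assert (hb : 0 <= b) by (unfold b; apply Rmult_le_pos; auto; apply Rdiv_le_0_compat; lra).
  assert (hk := kkt a b ((1 - eps) / 2) (ln 2) mu q hapos hb ltac:(lra) hL hmu hq).
  cbv zeta in hk.
  set (xs := / 2 * Rmax 0 (sqrt (b ^ 2 + 4 * ((1 - eps) / 2 * a * b * mu / ln 2)) - b - 2)) in *.
  assert (hxs : 0 <= xs) by (unfold xs; assert (0 <= Rmax 0 (sqrt (b ^ 2 + 4 * ((1 - eps) / 2 * a * b * mu / ln 2)) - b - 2)) by apply Rmax_l; lra).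
  replace (a * (xs / a)) with xs by (field; lra).
  rewrite !term_eq; try nra.
  rewrite term_eq1; try nra.
  replace ((a * q - xs) / (a * mu)) with (/ mu * q - / mu * (xs / a)) in hk by (field; lra).
  unfold Rdiv in *.
  replace ((1 - eps) * / 2 * ((G b (a * q) + ln (1 + b)) * / ln 2)) with
    ((1 - eps) * / 2 * (G b (a * q) * / ln 2) + (1 - eps) * / 2 * (ln (1 + b) * / ln 2)) by ring.
  replace ((1 - eps) * / 2 * ((G b xs + ln (1 + b)) * / ln 2)) with
    ((1 - eps) * / 2 * (G b xs * / ln 2) + (1 - eps) * / 2 * (ln (1 + b) * / ln 2)) by ring.
  lra.
Qed.

Lemma qmu_nonneg eps s1 s2 (alpha beta d : nat -> R) mu k :
  0 < s1 -> 0 < alpha k -> 0 <= q_mu eps s1 s2 alpha beta d mu k.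
Proof.
  intros h1 ha. unfold q_mu, pos_part. apply Rmult_le_pos.
  apply Rdiv_le_0_compat; lra. apply Rmax_l.
Qed.

Theorem mainTheorem3 (D : nat) (P s1 s2 eps : R) (alpha beta d : nat -> R)
  (hD : (1 <= D)%nat) (hP : 0 < P) (hs1 : 0 < s1) (hs2 : 0 < s2)
  (halpha : forall k, (k < D)%nat -> 0 < alpha k)
  (hbeta : forall k, (k < D)%nat -> 0 < beta k)
  (hd : forall k, (k < D)%nat -> 0 <= d k)
  (hdpos : exists k, (k < D)%nat /\ 0 < d k)
  (heps : 0 <= eps < 1) :
  (* concavity of the objective on the nonnegative orthant *)
  (forall (q1 q2 : nat -> R) (t : R),
      (forall k, (k < D)%nat -> 0 <= q1 k) ->
      (forall k, (k < D)%nat -> 0 <= q2 k) ->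
      0 <= t <= 1 ->
      t * obj D eps s1 s2 alpha beta d q1 + (1 - t) * obj D eps s1 s2 alpha beta d q2
      <= obj D eps s1 s2 alpha beta d (fun k => t * q1 k + (1 - t) * q2 k))
  /\
  (exists mu2, 0 < mu2 /\ rsum D (q_mu eps s1 s2 alpha beta d mu2) = P)
  /\
  (forall mu2, 0 < mu2 -> rsum D (q_mu eps s1 s2 alpha beta d mu2) = P ->
     feasible D P (q_mu eps s1 s2 alpha beta d mu2) /\
     forall q, feasible D P q ->
       obj D eps s1 s2 alpha beta d q
       <= obj D eps s1 s2 alpha beta d (q_mu eps s1 s2 alpha beta d mu2)).
Proof.
  assert (hL := ln2_pos).
  assert (hpa : forall k, (k < D)%nat -> 0 < alpha k / s1).
  { intros k hk. apply Rdiv_lt_0_compat; auto. }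
  assert (hpb : forall k, (k < D)%nat -> 0 <= beta k / s2 * d k).
  { intros k hk. apply Rmult_le_pos; auto. apply Rdiv_le_0_compat; [left; auto|lra]. }
  split; [|split].
  -
    intros q1 q2 t h1 h2 ht. unfold obj.
    set (K := (1 - eps) / 2).
    replace (t * (K * rsum D (fun k => log2 ((1 + alpha k / s1 * q1 k) * (1 + beta k / s2 * d k) / (1 + alpha k / s1 * q1 k + beta k / s2 * d k))))
     + (1 - t) * (K * rsum D (fun k => log2 ((1 + alpha k / s1 * q2 k) * (1 + beta k / s2 * d k) / (1 + alpha k / s1 * q2 k + beta k / s2 * d k)))))
      with (K * (t * rsum D (fun k => log2 ((1 + alpha k / s1 * q1 k) * (1 + beta k / s2 * d k) / (1 + alpha k / s1 * q1 k + beta k / s2 * d k)))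
     + (1 - t) * rsum D (fun k => log2 ((1 + alpha k / s1 * q2 k) * (1 + beta k / s2 * d k) / (1 + alpha k / s1 * q2 k + beta k / s2 * d k))))) by ring.
    apply Rmult_le_compat_l. unfold K; lra.
    rewrite <- rsum_lin2. apply rsum_le. intros k hk.
    apply term_concave; auto. left; auto.
  -
    set (K := (1 - eps) / 2).
    set (e := fun k => K * (alpha k / s1) * (beta k / s2 * d k) / ln 2).
    assert (he : forall k, (k < D)%nat -> 0 <= e k).
    { intros k hk. unfold e, K. apply Rdiv_le_0_compat; [|lra].
      apply Rmult_le_pos; [apply Rmult_le_pos|]; [lra|left; auto|auto]. }
    set (M := rsum D e).
    assert (hM : 0 <= M) by (apply rsum_nonneg; auto).
    set (mu0 := / (M + 1)).
    assert (hmu0 : 0 < mu0) by (unfold mu0; apply Rinv_0_lt_compat; lra).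
    assert (F0 : rsum D (q_mu eps s1 s2 alpha beta d mu0) = 0).
    { rewrite <- (rsum_zero D). apply rsum_ext. intros k hk.
      rewrite qmu_form; auto.
      assert (hek : e k <= M) by (apply rsum_ge_term; auto).
      set (b := beta k / s2 * d k) in *.
      assert (hb := hpb k hk). change (0 <= b) in hb.
      assert (hc : (1 - eps) / 2 * (alpha k / s1) * b * mu0 / ln 2 = e k * mu0).
      { unfold e, K, b. cbv beta. field; lra. }
      rewrite hc.
      assert (hc1 : e k * mu0 < 1).
      { unfold mu0. apply (Rmult_lt_reg_r (M + 1)); [lra|].
        rewrite Rmult_assoc, Rinv_l; lra. }
      assert (hc0 : 0 <= e k * mu0) by (apply Rmult_le_pos; auto; lra).
      set (S := sqrt (b ^ 2 + 4 * (e k * mu0))).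
      assert (hS2 : S * S = b ^ 2 + 4 * (e k * mu0)) by (unfold S; apply sqrt_sqrt; nra).
      assert (hS : 0 <= S) by (unfold S; apply sqrt_pos).
      assert (S < b + 2).
      { destruct (Rlt_le_dec S (b + 2)) as [hh|hh]; auto.
        assert ((b + 2) * (b + 2) <= S * S) by (apply Rmult_le_compat; lra).
        simpl in hS2. nra. }
      rewrite Rmax_left by lra. unfold Rdiv; ring. }
    destruct hdpos as [k0 [hk0 hd0]].
    set (a0 := alpha k0 / s1). set (b0 := beta k0 / s2 * d k0).
    assert (ha0 : 0 < a0) by (apply hpa; auto).
    assert (hb0 : 0 < b0) by (unfold b0; apply Rmult_lt_0_compat; auto; apply Rdiv_lt_0_compat; auto).
    assert (he0 : 0 < e k0).
    { unfold e, K. apply Rdiv_lt_0_compat; [|lra].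
      apply Rmult_lt_0_compat; [apply Rmult_lt_0_compat|]; [lra|auto|auto]. }
    set (T := b0 + 2 + 2 * alpha k0 * P / s1).
    assert (hT : 0 < T) by (unfold T; assert (0 < 2 * alpha k0 * P / s1) by (apply Rdiv_lt_0_compat; auto; assert (0 < alpha k0) by auto; nra); lra).
    set (mu1 := mu0 + T ^ 2 / (4 * e k0) + 1).
    assert (hT2 : 0 <= T ^ 2 / (4 * e k0)) by (apply Rdiv_le_0_compat; nra).
    assert (hmu01 : mu0 < mu1) by (unfold mu1; lra).
    assert (F1 : P < rsum D (q_mu eps s1 s2 alpha beta d mu1)).
    { apply Rlt_le_trans with (q_mu eps s1 s2 alpha beta d mu1 k0).
      2:{ apply rsum_ge_term; auto. intros k hk. apply qmu_nonneg; auto. }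
      rewrite qmu_form; auto.
      fold a0 b0.
      assert (hc : (1 - eps) / 2 * a0 * b0 * mu1 / ln 2 = e k0 * mu1) by (unfold e, a0, b0, K; cbv beta; field; lra).
      rewrite hc.
      assert (hc1 : T ^ 2 < 4 * (e k0 * mu1)).
      { unfold mu1. replace (4 * (e k0 * (mu0 + T ^ 2 / (4 * e k0) + 1))) with (4 * e k0 * mu0 + T ^ 2 + 4 * e k0) by (field; lra).
        nra. }
      set (S := sqrt (b0 ^ 2 + 4 * (e k0 * mu1))).
      assert (hS2 : S * S = b0 ^ 2 + 4 * (e k0 * mu1)) by (unfold S; apply sqrt_sqrt; nra).
      assert (hS : 0 <= S) by (unfold S; apply sqrt_pos).
      assert (hST : T < S) by nra.
      rewrite Rmax_right by (unfold T in hST; assert (0 < 2 * alpha k0 * P / s1) by (apply Rdiv_lt_0_compat; auto; assert (0 < alpha k0) by auto; nra); lra).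
      unfold T in hST.
      apply (Rmult_lt_reg_r a0); auto.
      unfold Rdiv at 1. rewrite Rmult_assoc, Rinv_l by lra.
      unfold a0. unfold a0 in ha0.
      replace (P * (alpha k0 / s1)) with (/ 2 * (2 * alpha k0 * P / s1)) by (field; lra).
      lra. }
    destruct (IVT_interv (fun mu => rsum D (q_mu eps s1 s2 alpha beta d mu) - P) mu0 mu1) as [z [hz1 hz2]].
    + intros x hx. apply continuity_pt_filterlim.
      apply (continuous_minus (fun mu => rsum D (q_mu eps s1 s2 alpha beta d mu)) (fun _ => P)); [|apply continuous_const].
      apply (rsum_cont (fun k mu => q_mu eps s1 s2 alpha beta d mu k)).
      intros k. apply qmu_cont.
    + exact hmu01.
    + simpl. rewrite F0. lra.
    + simpl. lra.
    + exists z. split; [lra|]. simpl in hz2. lra.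
  -
    intros mu hmu hsum. split.
    + split; [|lra]. intros k hk. apply qmu_nonneg; auto.
    + intros q [hq hqP]. unfold obj.
      rewrite <- !rsum_scal.
      apply Rle_trans with (rsum D (fun k =>
         (1 - eps) / 2 * log2 ((1 + alpha k / s1 * q_mu eps s1 s2 alpha beta d mu k) * (1 + beta k / s2 * d k)
        / (1 + alpha k / s1 * q_mu eps s1 s2 alpha beta d mu k + beta k / s2 * d k))
        + / mu * q k - / mu * q_mu eps s1 s2 alpha beta d mu k)).
      * apply rsum_le. intros k hk. apply term_opt; auto. left; auto.
      * rewrite rsum_lin3. rewrite hsum.
        assert (/ mu * rsum D q <= / mu * P).
        { apply Rmult_le_compat_l; auto. left; apply Rinv_0_lt_compat; auto. }
        lra.
Qed.
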